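(* If $M$ is a simple rank-$r$ matroid that has no $3$-element circuit and no $3$-claw, then $|E(M)| \ge 2^{r-1}$. If equality holds, then $M \cong \mathrm{AG}(r-1,2)$.
   Context: A claw of a matroid $M$ is a set that is both a flat and an independent set of $M$; a $k$-claw is a claw of size $k$. $\mathrm{AG}(r-1,2)$ is the rank-$r$ binary affine geometry, obtained from the binary projective geometry $\mathrm{PG}(r-1,2)$ by deleting a hyperplane. *)

(* Defs.v *)
From HB Require Import structures.
From mathcomp Require Import all_boot all_order all_algebra.
Set Implicit Arguments. Unset Strict Implicit. Unset Printing Implicit Defensive.
Import GRing.Theory.

(* A matroid whose ground set is the whole finite type T, given by its
   independent sets (axioms I1-I3). *)
Record matroid (T : finType) := Matroid {
  indep : {set T} -> bool;
  indep0 : indep set0;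
  indep_sub : forall A B : {set T}, A \subset B -> indep B -> indep A;
  indep_aug : forall A B : {set T}, indep A -> indep B -> #|A| < #|B| ->
     exists2 e, e \in B :\: A & indep (e |: A)
}.

Section MatroidNotions.
Variables (T : finType) (M : matroid T).

Definition mrank (X : {set T}) : nat :=
  \max_(I : {set T} | (I \subset X) && indep M I) #|I|.

Definition rank_of : nat := mrank [set: T].

Definition circuit (C : {set T}) : bool :=
  ~~ indep M C && [forall D : {set T}, (D \proper C) ==> indep M D].

(* simple: no loops and no parallel pairs, i.e. every circuit has >= 3 elements *)
Definition simple : Prop := forall C, circuit C -> 2 < #|C|.

Definition flat (X : {set T}) : bool :=
  [forall e, (e \notin X) ==> (mrank X < mrank (e |: X))].

Definition claw (X : {set T}) : bool := flat X && indep M X.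

End MatroidNotions.

(* Points of AG(n,2), of rank n+1: PG(n,2) is the set of nonzero vectors of
   F_2^(n+1); deleting the hyperplane {x_0 = 0} leaves the vectors with x_0 = 1. *)
Definition AG_pts (n : nat) :=
  {v : 'rV['F_2]_n.+1 | v ord0 ord0 == 1%R}.

Definition iso_AG (T : finType) (M : matroid T) (n : nat) : Prop :=
  exists f : T -> AG_pts n, bijective f /\
    forall X : {set T}, indep M X = free [seq val (f x) | x <- enum X].

(* Main.v *)
Require Import Defs.
From mathcomp Require Import all_boot all_order all_algebra.
From mathcomp Require Import zify.
Set Implicit Arguments. Unset Strict Implicit. Unset Printing Implicit Defensive.

Section Tool.
Variables (T : finType) (M : matroid T).
Local Notation indep := (indep M).
Local Notation mrank := (mrank M).
Implicit Types (X Y Z A W I J K : {set T}) (x y e : T).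

Lemma mrank_ge (I X : {set T}) : I \subset X -> indep I -> #|I| <= mrank X.
Proof. by move=> sIX iI; rewrite /mrank; apply: (@leq_bigmax_cond _ _ _ I); rewrite sIX iI. Qed.

Lemma mrank_basis (X : {set T}) : exists I : {set T}, [/\ I \subset X, indep I & #|I| = mrank X].
Proof.
have h0 : 0 < #|[pred I : {set T} | (I \subset X) && indep I]|.
  by apply/card_gt0P; exists set0; rewrite inE sub0set indep0.
have [I0 hI e] := eq_bigmax_cond (fun I : {set T} => #|I|) h0.
move: hI; rewrite inE => /andP[sI iI]; exists I0; split=> //; by rewrite -e.
Qed.

Lemma mrank_le_card X : mrank X <= #|X|.
Proof. by have [I [sI _ <-]] := mrank_basis X; apply: subset_leq_card. Qed.

Lemma mrank_indep X : indep X -> mrank X = #|X|.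
Proof. by move=> iX; apply/eqP; rewrite eqn_leq mrank_le_card mrank_ge. Qed.

Lemma mrank_dep X : ~~ indep X -> mrank X < #|X|.
Proof.
move=> dX; have [I [sI iI eI]] := mrank_basis X; rewrite -eI ltn_neqAle subset_leq_card // andbT.
apply: contra dX => /eqP e; suff -> : X = I by []. by apply/esym/eqP; rewrite eqEcard sI e leqnn.
Qed.

Lemma indep_mrank X : (mrank X == #|X|) = indep X.
Proof.
case iX: (indep X); first by rewrite (mrank_indep iX) eqxx.
by apply/negbTE; rewrite neq_ltn (mrank_dep (negbT iX)).
Qed.

Lemma mrank_mono X Y : X \subset Y -> mrank X <= mrank Y.
Proof. move=> sXY; have [I [sI iI <-]] := mrank_basis X; apply: mrank_ge => //; exact: subset_trans sXY. Qed.

Lemma mrank_extend (I X : {set T}) : I \subset X -> indep I ->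
  exists J : {set T}, [/\ I \subset J, J \subset X, indep J & #|J| = mrank X].
Proof.
move=> sIX iI; move Hn: (mrank X - #|I|) => n; elim: n I sIX iI Hn => [|n IH] I sIX iI Hn.
  exists I; split=> //; apply/eqP; rewrite eqn_leq mrank_ge //; by rewrite -subn_eq0 Hn.
have [K [sK iK eK]] := mrank_basis X.
have lt : #|I| < #|K| by rewrite eK -subn_gt0 Hn.
have [e /setDP[eK' eI] ie] := indep_aug iI iK lt.
have s5 : e |: I \subset X by rewrite subUset sub1set (subsetP sK) ?sIX.
have s6 : mrank X - #|e |: I| = n by rewrite cardsU1 eI add1n subnS Hn.
have [J [s1 s2 s3 s4]] := IH (e |: I) s5 ie s6.
exists J; split=> //; apply: subset_trans s1; exact: subsetUr.
Qed.

Lemma mrank_U1 x X : mrank (x |: X) <= (mrank X).+1.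
Proof.
have [J [sJ iJ <-]] := mrank_basis (x |: X).
have h : #|J :\ x| <= mrank X.
  apply: mrank_ge; last by apply: indep_sub iJ; exact: subD1set.
  apply/subsetP => y /setD1P[yx yJ]; move: (subsetP sJ y yJ); rewrite !inE (negPf yx) //.
by rewrite (cardsD1 x J); case: (x \in J) => /=; rewrite ?add1n ?add0n ?ltnS // ltnW // ltnS.
Qed.

Lemma mrank_U1_mem x X : x \in X -> x |: X = X.
Proof. by move=> xX; apply/setUidPr; rewrite sub1set. Qed.

Lemma cl_mono x Y W : Y \subset W -> mrank (x |: Y) <= mrank Y -> mrank (x |: W) <= mrank W.
Proof.
move=> sYW hY; case xW: (x \in W); first by rewrite mrank_U1_mem.
have xY : x \notin Y by apply: contraFN xW => /(subsetP sYW).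
have [I [sI iI eI]] := mrank_basis Y.
have [J [sIJ sJ iJ eJ]] := mrank_extend (X := x |: W) (I := I) (ltac:(apply: subset_trans sI _; apply: subset_trans sYW _; exact: subsetUr)) iI.
rewrite leqNgt; apply/negP => lt.
have xJ : x \in J.
  apply: contraLR lt => xJ; rewrite -leqNgt -eJ; apply: mrank_ge => //.
  apply/subsetP => y yJ; move: (subsetP sJ y yJ); rewrite !inE; case: eqP => [eyx|//]; by rewrite -eyx yJ in xJ.
have : #|x |: I| <= mrank (x |: Y).
  apply: mrank_ge; first by apply: setUS.
  by apply: indep_sub iJ; rewrite subUset sub1set xJ sIJ.
rewrite cardsU1 eI (contra (subsetP sI x) xY) add1n => h; by have := leq_trans h hY; rewrite ltnn.
Qed.

Lemma cl_span A Z : A \subset Z -> {in Z, forall z, mrank (z |: A) <= mrank A} -> mrank Z <= mrank A.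
Proof.
move=> sAZ hZ; have [I [sI iI eI]] := mrank_basis A.
have [J [sIJ sJ iJ eJ]] := mrank_extend (subset_trans sI sAZ) iI.
rewrite -eJ -eI leqNgt; apply/negP => lt.
have [e /setDP[eJ' eI']] : exists2 e, e \in J :\: I & true.
  have : 0 < #|J :\: I| by rewrite cardsD (setIidPr sIJ) subn_gt0.
  by case/card_gt0P => e he; exists e.
have := hZ e (subsetP sJ e eJ'); rewrite leqNgt => /negP h; exfalso; apply: h.
rewrite -eI; apply: (@leq_trans #|e |: I|); first by rewrite cardsU1 eI' add1n.
apply: mrank_ge; first exact: setUS.
by apply: indep_sub iJ; rewrite subUset sub1set eJ' sIJ.
Qed.

Lemma indepU1 x Y : x \notin Y -> indep (x |: Y) = indep Y && (mrank Y < mrank (x |: Y)).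
Proof.
move=> xY; apply/idP/andP => [iXY|[iY lt]].
  have iY : indep Y by apply: indep_sub iXY; exact: subsetUr.
  by split=> //; rewrite (mrank_indep iXY) (mrank_indep iY) cardsU1 xY.
rewrite -indep_mrank eqn_leq mrank_le_card /=.
by rewrite cardsU1 xY add1n -(mrank_indep iY).
Qed.

End Tool.
Arguments mrank_ge {T M}. Arguments mrank_basis {T M}. Arguments mrank_le_card {T M}.
Arguments mrank_indep {T M}. Arguments mrank_dep {T M}. Arguments indep_mrank {T M}.
Arguments mrank_mono {T M}. Arguments mrank_extend {T M}. Arguments mrank_U1 {T M}.
Arguments cl_mono {T M}. Arguments cl_span {T M}. Arguments indepU1 {T M}.


Ltac setsolve := apply/setP => ?; rewrite !inE; by do ! case: eqP.

Ltac fin hQ aH bH cH dH := rewrite ?hQ ?eqxx ?orbT ?aH ?bH ?cH ?dH //;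
  let z := fresh "z" in move=> z; rewrite hQ => /or4P[] /eqP ->; rewrite ?eqxx ?aH ?bH ?cH ?dH //=.

Section Main.
Variables (T : finType) (M : matroid T).
Hypothesis Msimple : simple M.
Hypothesis no3c : forall C : {set T}, circuit M C -> #|C| != 3.
Hypothesis no3w : forall X : {set T}, claw M X -> #|X| != 3.
Local Notation indep := (indep M).
Local Notation mrank := (mrank M).
Implicit Types (X Y Z A W I J K F G : {set T}) (x y e a b c d p : T).

Lemma small_indep X : #|X| <= 3 -> indep X.
Proof.
move=> h3.
move: h3; move: {2}#|X| (leqnn #|X|) => n; elim: n X => [|n IH] X hX h3.
  by move: hX; rewrite leqn0 cards_eq0 => /eqP ->; exact: indep0.
case iX: (indep X) => //.
have cX : circuit M X.
  rewrite /circuit iX /=; apply/forallP => D; apply/implyP => pD.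
  by apply: IH; [rewrite -ltnS; apply: leq_trans (proper_card pD) hX | apply: leq_trans (ltnW (proper_card pD)) h3].
have := Msimple cX; have := no3c cX; move: h3; rewrite leq_eqVlt ltnS => /orP[-> //|].
by rewrite leq_eqVlt ltnS => /orP[/eqP -> //|]; rewrite leq_eqVlt => /orP[/eqP ->|]; rewrite // ltnS leqn0 => /eqP ->.
Qed.

Lemma card3 a b c : a != b -> a != c -> b != c -> #|[set a; b; c]| = 3.
Proof.
move=> ab ac bc; rewrite -setUA cardsU1 cards2 bc !inE negb_or ab ac //.
Qed.

Lemma card3_le a b c : #|[set a; b; c]| <= 3.
Proof. rewrite -setUA cardsU1 cards2; by case: (_ \notin _); case: (b != c). Qed.

Lemma indep3 a b c : indep [set a; b; c].
Proof. apply: small_indep; exact: card3_le. Qed.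

Lemma mrank3 a b c : a != b -> a != c -> b != c -> mrank [set a; b; c] = 3.
Proof. by move=> ab ac bc; rewrite mrank_indep ?indep3 ?card3. Qed.

Lemma dep_cl x Y : x \notin Y -> indep Y -> ~~ indep (x |: Y) -> mrank (x |: Y) <= mrank Y.
Proof. by move=> xY iY; rewrite indepU1 // iY /= -leqNgt. Qed.

Definition op a b c : T :=
  odflt a [pick d | (d \notin [set a; b; c]) && ~~ indep (d |: [set a; b; c])].

Lemma op_ex a b c : a != b -> a != c -> b != c ->
  exists d, (d \notin [set a; b; c]) && ~~ indep (d |: [set a; b; c]).
Proof.
move=> ab ac bc; set X := [set a; b; c].
have iX : indep X by exact: indep3.
have : ~~ claw M X by apply/negP => cl; move: (no3w cl); rewrite card3.
rewrite /claw iX andbT /flat => /forallPn[d]; rewrite negb_imply -leqNgt => /andP[dX le].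
exists d; rewrite dX /= indepU1 // iX /= -leqNgt //.
Qed.

Lemma op_spec a b c : a != b -> a != c -> b != c ->
  (op a b c \notin [set a; b; c]) && ~~ indep (op a b c |: [set a; b; c]).
Proof.
move=> ab ac bc; rewrite /op; case: pickP => [d -> //|H].
by have [d] := op_ex ab ac bc; rewrite H.
Qed.

Definition opclosed W := forall a b c, a \in W -> b \in W -> c \in W ->
  a != b -> a != c -> b != c -> op a b c \in W.

Lemma opclosedT : opclosed [set: T].
Proof. by move=> *; rewrite inE. Qed.

Lemma op_cl a b c W : a != b -> a != c -> b != c -> [set a; b; c] \subset W ->
  mrank (op a b c |: W) <= mrank W.
Proof.
move=> ab ac bc sW; apply: cl_mono sW _.
have /andP[h1 h2] := op_spec ab ac bc; exact: dep_cl h1 (indep3 _ _ _) h2.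
Qed.


Lemma sub3 a b c W : a \in W -> b \in W -> c \in W -> [set a; b; c] \subset W.
Proof. by move=> aW bW cW; apply/subsetP => z; rewrite !inE => /orP[/orP[]|] /eqP ->. Qed.

Lemma Lstep F W p e : opclosed W -> F \subset W -> p \in F -> e \in W ->
  mrank F < mrank (e |: F) ->
  [/\ F :|: (e |: [set op p x e | x in F :\ p]) \subset W,
      mrank (F :|: (e |: [set op p x e | x in F :\ p])) = (mrank F).+1 &
      #|F :|: (e |: [set op p x e | x in F :\ p])| = (#|F|).*2].
Proof.
move=> oW sFW pF eW lt.
have eF : e \notin F by apply/negP => eF; move: lt; rewrite mrank_U1_mem // ltnn.
have dist x : x \in F :\ p -> [/\ p != x, p != e & x != e].
  move=> /setD1P[xp xF]; split; first by rewrite eq_sym.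
  - by apply: contraNneq eF => <-.
  - by apply: contraNneq eF => <-.
have spec x : x \in F :\ p -> [/\ op p x e \notin F, op p x e != e, op p x e != p,
     op p x e != x & ~~ indep (op p x e |: [set p; x; e])].
  move=> hx; have [px pe xe] := dist x hx.
  have /andP[h1 h2] := op_spec px pe xe.
  have dp : op p x e != p by apply: contraNneq h1 => ->; rewrite !inE eqxx.
  have dx : op p x e != x by apply: contraNneq h1 => ->; rewrite !inE eqxx ?orbT.
  have de : op p x e != e by apply: contraNneq h1 => ->; rewrite !inE eqxx ?orbT.
  split=> //; apply/negP => dF.
  have : mrank (e |: [set p; x; op p x e]) <= mrank [set p; x; op p x e].
    apply: dep_cl; first by rewrite !inE !negb_or ![e == _]eq_sym pe xe de.
      exact: indep3.
    by rewrite (_ : e |: [set p; x; op p x e] = op p x e |: [set p; x; e]) //; setsolve.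
  have xF : x \in F by case/setD1P: hx.
  move=> h; have := cl_mono _ _ _ (sub3 pF xF dF) h; by rewrite leqNgt lt.
set D := [set op p x e | x in F :\ p].
have injD : {in F :\ p &, injective (fun x => op p x e)}.
  move=> x y hx hy exy; case: (eqVneq x y) => // nxy; exfalso.
  have [px pe xe] := dist x hx; have [py _ ye] := dist y hy.
  have [dF de dp dx dep] := spec x hx; have [_ _ _ dy depy] := spec y hy.
  rewrite /= -exy in dy depy.
  set d := op p x e in dF de dp dx dep dy depy.
  have xF : x \in F by case/setD1P: hx. have yF : y \in F by case/setD1P: hy.
  have iS : indep [set p; e; d] by exact: indep3.
  have clx : mrank (x |: [set p; e; d]) <= mrank [set p; e; d].
    apply: dep_cl iS _; first by rewrite !inE !negb_or eq_sym px xe; apply: contraNneq dF => <-.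
    by rewrite (_ : x |: [set p; e; d] = d |: [set p; x; e]) //; setsolve.
  have cly : mrank (y |: [set p; e; d]) <= mrank [set p; e; d].
    apply: dep_cl iS _; first by rewrite !inE !negb_or eq_sym py ye; apply: contraNneq dF => <-.
    by rewrite (_ : y |: [set p; e; d] = d |: [set p; y; e]) //; setsolve.
  have hZ : mrank (x |: (y |: [set p; e; d])) <= mrank [set p; e; d].
    apply: cl_span; first by apply: subset_trans (subsetU1 y _) (subsetU1 x _).
    move=> z; rewrite in_setU1 => /orP[/eqP ->//|]; rewrite in_setU1 => /orP[/eqP ->//|zS].
    by rewrite mrank_U1_mem.
  have h3 : mrank (e |: [set p; x; y]) <= mrank [set p; x; y].
    rewrite mrank3 //.
    have s1 : e |: [set p; x; y] \subset x |: (y |: [set p; e; d]).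
      apply/subsetP => z; rewrite !inE; by do ! case: eqP.
    apply: leq_trans (mrank_mono _ _ s1) _; apply: leq_trans hZ _.
    exact: leq_trans (mrank_le_card _) (card3_le _ _ _).
  move: (cl_mono _ _ _ (sub3 pF xF yF) h3).
  by rewrite leqNgt lt.
have eD : e \notin D by apply/imsetP => -[x hx ex]; have [_ + _ _ _] := spec x hx; rewrite -ex eqxx.
have FD : F :&: (e |: D) = set0.
  apply/setP => z; rewrite !inE; apply/negP => /andP[zF /orP[/eqP ze|/imsetP[x hx zx]]].
    by rewrite -ze zF in eF.
  by have [+ _ _ _ _] := spec x hx; rewrite -zx zF.
split.
- rewrite !subUset sFW sub1set eW /=; apply/subsetP => z /imsetP[x hx ->].
  have [px pe xe] := dist x hx.
  apply: oW => //; [exact: (subsetP sFW) | apply: (subsetP sFW); by case/setD1P: hx].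
- apply/eqP; rewrite eqn_leq; apply/andP; split.
    apply: leq_trans (mrank_U1 e F); apply: cl_span; first by apply/subsetP => z; rewrite !inE; case/orP => ->; rewrite ?orbT.
    move=> z; rewrite !inE => /orP[zF|/orP[/eqP ->|/imsetP[x hx ->]]].
    + have h : z \in e |: F by rewrite inE zF orbT. by rewrite (mrank_U1_mem h).
    + by rewrite (mrank_U1_mem (setU11 _ _)).
    + have [px pe xe] := dist x hx; apply: op_cl => //.
      apply: sub3; rewrite !inE ?eqxx ?pF ?orbT //.
      by case/setD1P: hx => _ ->; rewrite orbT.
  apply: leq_trans lt (mrank_mono _ _ _); by apply/subsetP => z; rewrite !inE; case/orP => ->; rewrite ?orbT.
- rewrite cardsU FD cards0 subn0 cardsU1 eD card_in_imset // (cardsD1 p F) pF.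
  by rewrite -addnn.
Qed.


Lemma exists_out F W : F \subset W -> mrank F < mrank W ->
  exists2 e, e \in W & mrank F < mrank (e |: F).
Proof.
move=> sFW lt; case: (boolP [exists e in W, mrank F < mrank (e |: F)]).
  by case/exists_inP => e; exists e.
move/exists_inPn => H; exfalso.
have h : {in W, forall z, mrank (z |: F) <= mrank F} by move=> z zW; rewrite leqNgt H.
have := cl_span _ _ sFW h.
by rewrite leqNgt lt.
Qed.

Lemma Ucount W : opclosed W -> forall m F, F \subset W -> F != set0 ->
  mrank W - mrank F = m -> 2 ^ m * #|F| <= #|W|.
Proof.
move=> oW m; elim: m => [|m IH] F sFW nF hm.
  by rewrite mul1n subset_leq_card.
have lt : mrank F < mrank W by rewrite -subn_gt0 hm.
have [e eW le] := exists_out sFW lt.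
have [p pF] : exists p, p \in F by apply/set0Pn.
have [sG rG cG] := Lstep oW sFW pF eW le.
have := IH _ sG _ _.
rewrite cG -mul2n mulnA -expnSr => h; apply: h.
  by rewrite -card_gt0 cG double_gt0 card_gt0.
by rewrite rG subnS hm.
Qed.


Lemma mrank1 x : mrank [set x] = 1.
Proof. by rewrite mrank_indep ?cards1 // small_indep // cards1. Qed.

Lemma mrank_pos F : F != set0 -> 0 < mrank F.
Proof.
case/set0Pn => x xF; apply: leq_trans (mrank_mono _ _ _ : mrank [set x] <= _).
  by rewrite mrank1.
by rewrite sub1set.
Qed.

Section Eq.
Hypothesis hcard : #|T| = 2 ^ (mrank [set: T] - 1).

Lemma E1 F : F != set0 -> #|F| <= 2 ^ (mrank F - 1).
Proof.
move=> nF; have j1 := mrank_pos nF.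
have jR : mrank F <= mrank [set: T] by apply: mrank_mono; exact: subsetT.
have := Ucount opclosedT (subsetT F) nF erefl.
rewrite cardsT hcard (_ : mrank [set: T] - 1 = (mrank [set: T] - mrank F) + (mrank F - 1)).
  by rewrite expnD leq_pmul2l // expn_gt0.
lia.
Qed.

Lemma E2 W : opclosed W -> W != set0 -> 2 ^ (mrank W - 1) <= #|W|.
Proof.
move=> oW /set0Pn[x xW].
have := Ucount oW (m := mrank W - 1) (F := [set x]) _ _ _.
rewrite cards1 muln1; apply; first by rewrite sub1set.
  by apply/set0Pn; exists x; rewrite inE.
by rewrite mrank1.
Qed.

Definition closedset W := forall x, x \notin W -> mrank W < mrank (x |: W).

Lemma opclosed_closed W : opclosed W -> W != set0 -> closedset W.
Proof.
move=> oW nW x xW; rewrite ltnNge; apply/negP => le.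
have := E1 (F := x |: W) (ltac:(apply/set0Pn; exists x; exact: setU11)).
rewrite cardsU1 xW add1n => h.
have h2 : 2 ^ (mrank (x |: W) - 1) <= 2 ^ (mrank W - 1) by apply: leq_pexp2l => //; exact: leq_sub2r.
by have := leq_trans h (leq_trans h2 (E2 oW nW)); rewrite ltnn.
Qed.

Lemma closed_opclosed W : closedset W -> opclosed W.
Proof.
move=> cW a b c aW bW cW' ab ac bc; apply/negPn/negP => h.
have := cW _ h; rewrite ltnNge op_cl //; exact: sub3.
Qed.

Lemma uniq4 (S : {set T}) d d' : #|S| = 3 -> d \notin S -> d' \notin S ->
  ~~ indep (d |: S) -> ~~ indep (d' |: S) -> d = d'.
Proof.
move=> cS dS d'S hd hd'; apply/eqP/negP => /negP ne.
have iS : indep S by apply: small_indep; rewrite cS.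
have hZ : mrank (d |: (d' |: S)) <= mrank S.
  apply: cl_span; first by apply: subset_trans (subsetU1 d' _) (subsetU1 d _).
  move=> z; rewrite in_setU1 => /orP[/eqP ->|]; first exact: dep_cl.
  rewrite in_setU1 => /orP[/eqP ->|zS]; first exact: dep_cl.
  by rewrite mrank_U1_mem.
have := E1 (F := d |: (d' |: S)) (ltac:(apply/set0Pn; exists d; exact: setU11)).
rewrite cardsU1 cardsU1 d'S cS !inE negb_or ne dS /=.
move/leq_trans => /(_ _ (leq_pexp2l _ (leq_sub2r 1 hZ))).
by rewrite (mrank_indep _ iS) cS => /(_ isT).
Qed.


Lemma P1 H Q u : closedset H -> ~~ indep Q -> #|Q| = 4 -> u \in Q -> u \notin H ->
  Q :\ u \subset H -> False.
Proof.
move=> cH dQ cQ uQ uH sQ.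
have c3 : #|Q :\ u| = 3 by move: cQ; rewrite (cardsD1 u Q) uQ => -[].
have h := dep_cl (x := u) (Y := Q :\ u) (negbT (setD11 _ _)) (small_indep (eq_leq c3)).
move: dQ; rewrite -(setD1K uQ) => dQ; have := cl_mono _ _ _ sQ (h dQ).
by rewrite leqNgt cH.
Qed.

Lemma P3 H Q w : closedset H -> (mrank H).+1 = mrank [set: T] -> ~~ indep Q -> #|Q| = 4 ->
  w \in Q -> w \in H -> (forall z, z \in Q -> z != w -> z \notin H) -> False.
Proof.
move=> cH rH dQ cQ wQ wH outH.
have c3 : #|Q :\ w| = 3 by move: cQ; rewrite (cardsD1 w Q) wQ => -[].
have [u1 u1Q] : exists u1, u1 \in Q :\ w by apply/set0Pn; rewrite -card_gt0 c3.
have c2 : #|Q :\ w :\ u1| = 2 by move: c3; rewrite (cardsD1 u1 (Q :\ w)) u1Q => -[].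
have [u2 u2Q] : exists u2, u2 \in Q :\ w :\ u1 by apply/set0Pn; rewrite -card_gt0 c2.
have c1 : #|Q :\ w :\ u1 :\ u2| == 1 by move: c2; rewrite (cardsD1 u2 (Q :\ w :\ u1)) u2Q /=; lia.
have [u3 E3] := cards1P c1.
have u3Q : u3 \in Q :\ w :\ u1 :\ u2 by rewrite E3 set11.
move: u1Q u2Q u3Q; rewrite !inE => /andP[u1w u1Q] /and3P[u2u1 u2w u2Q] /and4P[u3u2 u3u1 u3w u3Q].
have hz z : (z \in Q) = [|| z == w, z == u1, z == u2 | z == u3].
  have := congr1 (fun A => z \in A) E3; rewrite /= !inE.
  case: (eqVneq z w) => [->|_]; first by rewrite wQ.
  case: (eqVneq z u1) => [->|_]; first by rewrite u1Q.
  case: (eqVneq z u2) => [->|_] /=; [by rewrite u2Q | by []].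
have EQ : Q = u3 |: [set w; u1; u2] by apply/setP => z; rewrite hz !inE; by do ! case: eqP.
have u1H := outH _ u1Q u1w; have u2H := outH _ u2Q u2w; have u3H := outH _ u3Q u3w.
have nH : H != set0 by apply/set0Pn; exists w.
have oH := closed_opclosed cH.
have cardH : #|H| = 2 ^ (mrank H - 1).
  by apply/eqP; rewrite eqn_leq E1 // E2.
have [sG _ cG] := Lstep opclosedT (subsetT H) wH (in_setT u1) (cH _ u1H).
have GT : H :|: (u1 |: [set op w x u1 | x in H :\ w]) = [set: T].
  apply/eqP; rewrite eqEcard subsetT cardsT cG hcard -rH cardH /= subn1 -mul2n -expnS.
  by rewrite /= subn1 prednK ?mrank_pos.
have : u2 \in [set: T] by [].
rewrite -GT !inE (negPf u2H) (negPf u2u1) /= => /imsetP[x /setD1P[xw xH] Eu2].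
have wx : w != x by rewrite eq_sym.
have wu1 : w != u1 by rewrite eq_sym.
have xu1 : x != u1 by apply: contraNneq u1H => <-.
have /andP[_ dep] := op_spec wx wu1 xu1.
rewrite -Eu2 in dep.
have ex : x = u3.
  apply: (uniq4 (S := [set w; u1; u2])).
  - by rewrite card3 // eq_sym.
  - rewrite !inE !negb_or xw xu1 /=; apply/eqP => E; by rewrite -E xH in u2H.
  - by rewrite !inE !negb_or u3w u3u1 u3u2.
  - by rewrite (_ : x |: [set w; u1; u2] = u2 |: [set w; x; u1]) //; setsolve.
  - by rewrite -EQ.
by rewrite -ex xH in u3H.
Qed.


Lemma parity H a b c : closedset H -> (mrank H).+1 = mrank [set: T] ->
  a != b -> a != c -> b != c ->
  (op a b c \notin H) = (a \notin H) (+) (b \notin H) (+) (c \notin H).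
Proof.
move=> cH rH ab ac bc.
have /andP[h1 dQ] := op_spec ab ac bc.
set d := op a b c in h1 dQ *.
set Q := d |: [set a; b; c] in dQ.
have cQ : #|Q| = 4 by rewrite cardsU1 h1 card3.
have hQ z : (z \in Q) = [|| z == d, z == a, z == b | z == c].
  by rewrite !inE -!orbA.
have [da db dc] : [/\ d != a, d != b & d != c].
  by move: h1; rewrite !inE !negb_or => /andP[/andP[-> ->] ->].
have P1' u : u \in Q -> u \notin H -> (forall z, z \in Q -> z != u -> z \in H) -> False.
  move=> uQ uH hz; apply: (P1 cH dQ cQ uQ uH); apply/subsetP => z /setD1P[zu zQ]; exact: hz.
have P3' w : w \in Q -> w \in H -> (forall z, z \in Q -> z != w -> z \notin H) -> False.
  move=> wQ wH hz; exact: (P3 cH rH dQ cQ wQ wH hz).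
case aH: (a \in H); case bH: (b \in H); case cH': (c \in H); case dH: (d \in H) => //=; exfalso.
all: first
  [ solve [ apply: (P1' a); fin hQ aH bH cH' dH ] | solve [ apply: (P1' b); fin hQ aH bH cH' dH ]
  | solve [ apply: (P1' c); fin hQ aH bH cH' dH ] | solve [ apply: (P1' d); fin hQ aH bH cH' dH ]
  | solve [ apply: (P3' a); fin hQ aH bH cH' dH ] | solve [ apply: (P3' b); fin hQ aH bH cH' dH ]
  | solve [ apply: (P3' c); fin hQ aH bH cH' dH ] | solve [ apply: (P3' d); fin hQ aH bH cH' dH ] ].
Qed.

End Eq.

End Main.

Import GRing.Theory.

Section Lin.
Variables (T : finType) (M : matroid T) (n : nat).
Hypothesis Msimple : simple M.
Hypothesis no3c : forall C : {set T}, circuit M C -> #|C| != 3.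
Hypothesis no3w : forall X : {set T}, claw M X -> #|X| != 3.
Hypothesis hr : mrank M [set: T] = n.+1.
Hypothesis hcard : #|T| = 2 ^ (mrank M [set: T] - 1).
Local Notation indep := (indep M).
Local Notation mrank := (mrank M).
Local Notation op := (op M).
Implicit Types (X Y Z A W I J K F G : {set T}) (x y e a b c d p : T).

Variable B : {set T}.
Hypothesis iB : indep B.
Hypothesis cB : #|B| = n.+1.

Definition bas (i : 'I_n.+1) : T := enum_val (cast_ord (esym cB) i).
Lemma basB i : bas i \in B. Proof. exact: enum_valP. Qed.
Lemma bas_inj : injective bas.
Proof. by move=> i j /enum_val_inj /cast_ord_inj. Qed.

Definition Hyp (i : 'I_n.+1) : {set T} :=
  [set x | mrank (x |: (B :\ bas i)) <= mrank (B :\ bas i)].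

Lemma rankBi i : mrank (B :\ bas i) = n.
Proof.
rewrite mrank_indep; last by apply: indep_sub iB; exact: subD1set.
by move: cB; rewrite (cardsD1 (bas i)) basB => -[].
Qed.

Lemma BiHyp i : B :\ bas i \subset Hyp i.
Proof. by apply/subsetP => x xB; rewrite inE mrank_U1_mem. Qed.

Lemma rankHyp i : mrank (Hyp i) = n.
Proof.
apply/eqP; rewrite eqn_leq -{1 2}(rankBi i) (mrank_mono _ _ (BiHyp i)) andbT.
apply: cl_span; first exact: BiHyp.
by move=> z; rewrite inE.
Qed.

Lemma closedHyp i : closedset M (Hyp i).
Proof.
move=> x; rewrite inE -ltnNge rankHyp -{1}(rankBi i) => lt.
apply: leq_trans lt (mrank_mono _ _ _); apply: setUS; exact: BiHyp.
Qed.

Lemma hyperHyp i : (mrank (Hyp i)).+1 = mrank [set: T].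
Proof. by rewrite rankHyp hr. Qed.

Lemma basHyp i j : (bas j \in Hyp i) = (j != i).
Proof.
case: (eqVneq j i) => [->|ji].
  rewrite /Hyp inE setD1K ?basB // rankBi (mrank_indep _ iB) cB; by rewrite ltnn.
by rewrite /Hyp inE mrank_U1_mem ?leqnn // !inE basB andbT (inj_eq bas_inj) ji.
Qed.

Local Open Scope ring_scope.

Definition g x : 'rV['F_2]_n.+1 :=
  \row_j (if j == ord0 then 1 else (x \notin Hyp j)%:R).

Lemma g_op a b c : a != b -> a != c -> b != c -> g (op a b c) = g a + g b + g c.
Proof.
move=> ab ac bc; apply/rowP => j; rewrite !mxE.
case: (j == ord0); first by apply/eqP.
rewrite (parity Msimple no3c no3w hcard (@closedHyp j) (hyperHyp j) ab ac bc).
by case: (_ \notin _); case: (_ \notin _); case: (_ \notin _); apply/eqP.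
Qed.

Lemma g_bas j : g (bas j) = \row_k ((k == ord0) || (k == j))%:R.
Proof.
apply/rowP => k; rewrite !mxE basHyp negbK eq_sym.
by case: (ord0 == k); rewrite /= ?(eq_sym j k).
Qed.


Definition wv (S : {set 'I_n.+1}) : 'rV['F_2]_n.+1 := \row_k ((k == ord0) || (k \in S))%:R.

Lemma F2_01 (z : 'F_2) : z = (z == 1)%:R.
Proof. by case: z => [[|[|]]] //= ?; apply/val_inj. Qed.

Lemma F2_10 : (1 : 'F_2) != 0. Proof. by []. Qed.

Lemma gen (S : {set 'I_n.+1}) : ord0 \notin S -> exists x, g x = wv S.
Proof.
move: {2}#|S| (leqnn #|S|) => m; elim: m S => [|m IH] S hS S0.
  move: hS; rewrite leqn0 cards_eq0 => /eqP ->; exists (bas ord0).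
  by rewrite g_bas; apply/rowP => k; rewrite !mxE inE orbb orbF.
case: (set_0Vmem S) => [->|[i iS]].
  exists (bas ord0); by rewrite g_bas; apply/rowP => k; rewrite !mxE inE orbb orbF.
have i0 : i != ord0 by apply: contraNneq S0 => <-.
have S'0 : ord0 \notin S :\ i by rewrite inE negb_and S0 orbT.
have hS' : (#|S :\ i| <= m)%N by move: hS; rewrite (cardsD1 i S) iS.
have [x' hx'] := IH (S :\ i) hS' S'0.
case: (set_0Vmem (S :\ i)) => [E|[k kS]].
  exists (bas i); rewrite g_bas; apply/rowP => k; rewrite !mxE.
  have : (k \in S) = (k == i).
    have := congr1 (fun A : {set 'I_n.+1} => k \in A) E; rewrite /= !inE.
    by case: (eqVneq k i) => [->|]; rewrite ?iS.
  by move=> ->.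
have k0 : k != ord0 by apply: contraNneq S'0 => <-.
have d1 : x' != bas ord0.
  apply/negP => /eqP E; have := congr1 (fun v : 'rV['F_2]_n.+1 => v ord0 k) hx'.
  by rewrite E g_bas !mxE kS (negPf k0) orbT.
have d2 : x' != bas i.
  apply/negP => /eqP E; have := congr1 (fun v : 'rV['F_2]_n.+1 => v ord0 i) hx'.
  by rewrite E g_bas !mxE !inE eqxx (negPf i0) /=.
have d3 : bas ord0 != bas i by rewrite (inj_eq bas_inj) eq_sym.
exists (op x' (bas ord0) (bas i)); rewrite g_op // hx' !g_bas; apply/rowP => j; rewrite !mxE !inE.
case: (eqVneq j ord0) => [->|j0] /=; first by apply/eqP.
case: (eqVneq j i) => [->|ji] /=; first by rewrite iS; apply/eqP.
by rewrite !addr0.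
Qed.

Lemma g_surj (v : 'rV['F_2]_n.+1) : v ord0 ord0 = 1 -> exists x, g x = v.
Proof.
move=> v1; have h0 : ord0 \notin [set k | (k != ord0) && (v ord0 k == 1)] by rewrite inE eqxx.
have [x hx] := gen h0.
exists x; rewrite hx; apply/rowP => k; rewrite !mxE inE.
case: (eqVneq k ord0) => [->|k0] /=; first by rewrite v1.
by rewrite -F2_01.
Qed.


Lemma g0 x : g x ord0 ord0 == 1.
Proof. by rewrite mxE eqxx. Qed.

Definition gf x : AG_pts n := exist _ (g x) (g0 x).

Lemma card_AG : (2 ^ n <= #|{: AG_pts n}|)%N.
Proof.
pose hv (phi : {ffun 'I_n -> bool}) : 'rV['F_2]_n.+1 :=
    \row_j (if unlift ord0 j is Some k then (phi k)%:R else 1).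
have hv0 phi : hv phi ord0 ord0 == 1 by rewrite mxE unlift_none.
pose h (phi : {ffun 'I_n -> bool}) : AG_pts n := exist _ (hv phi) (hv0 phi).
have hinj : injective h.
  move=> p1 p2 /(congr1 val) /= E; apply/ffunP => k.
  have := congr1 (fun v : 'rV['F_2]_n.+1 => v ord0 (lift ord0 k)) E.
  rewrite /= !mxE liftK.
  by case: (p1 k); case: (p2 k) => // /eqP.
have := leq_card h hinj.
by rewrite card_ffun card_bool card_ord.
Qed.

Lemma gf_surj (v : AG_pts n) : exists x, gf x = v.
Proof.
have [x hx] := g_surj (eqP (svalP v)).
by exists x; apply: val_inj.
Qed.

Lemma gf_bij : bijective gf.
Proof.
pose finv (v : AG_pts n) := odflt (bas ord0) [pick x | gf x == v].
have K1 : cancel finv gf.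
  move=> v; rewrite /finv; case: pickP => [x /eqP //|H].
  by have [x hx] := gf_surj v; move: (H x); rewrite hx eqxx.
have finj : injective finv := can_inj K1.
have hc : (#|{: AG_pts n}| >= #|T|)%N by rewrite hcard hr subn1 card_AG.
have [finv' K2 K3] := inj_card_bij finj hc.
have E x : gf x = finv' x by rewrite -{1}(K3 x) K1.
exists finv => // x; by rewrite E K3.
Qed.

Lemma g_inj : injective g.
Proof.
move=> x y E; have [h K1 _] := gf_bij.
by rewrite -(K1 x) -(K1 y); congr h; apply: val_inj.
Qed.


Lemma addvv (v : 'rV['F_2]_n.+1) : v + v = 0.
Proof. apply/rowP => j; rewrite !mxE. by case: (v ord0 j) => [[|[|]]] //= ?; apply/val_inj. Qed.

Lemma opcl_sum Z k (f : 'I_k -> T) : opclosed M Z -> injective f -> (forall i, f i \in Z) ->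
  forall I : {set 'I_k}, odd #|I| -> exists2 z, z \in Z & g z = \sum_(i in I) g (f i).
Proof.
move=> oZ finj fZ I; move: {2}#|I| (leqnn #|I|) => m; elim: m I => [|m IH] I hI oI.
  by move: hI oI; rewrite leqn0 => /eqP ->.
have [i iI] : exists i, i \in I by apply/set0Pn; rewrite -card_gt0; case: #|I| oI.
case: (set_0Vmem (I :\ i)) => [E|[j jI]].
  have -> : I = [set i].
    apply/setP => l; rewrite inE; have := congr1 (fun A : {set 'I_k} => l \in A) E.
    by rewrite /= !inE; case: (eqVneq l i) => [->|].
  by exists (f i); rewrite ?big_set1.
move: (jI); rewrite !inE => /andP[ji jI'].
set I' := I :\ i :\ j.
have cI : #|I| = (#|I'|).+2.
  by rewrite (cardsD1 i I) iI (cardsD1 j (I :\ i)) jI.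
have h1 : (#|I'| <= m)%N by move: hI; rewrite cI ltnS => /ltnW.
have h2 : odd #|I'| by move: oI; rewrite cI /= negbK.
have [z' z'Z hz'] := IH I' h1 h2.
have Esum : \sum_(l in I) g (f l) = g (f i) + g (f j) + g z'.
  by rewrite (big_setD1 _ iI) (big_setD1 _ jI) /= -/I' -hz' addrA.
have fij : f i != f j by rewrite (inj_eq finj) eq_sym.
case: (eqVneq z' (f i)) => [E|zi].
  by exists (f j) => //; rewrite Esum E addrC addrA addvv add0r.
case: (eqVneq z' (f j)) => [E|zj].
  by exists (f i) => //; rewrite Esum E -addrA addvv addr0.
exists (op z' (f i) (f j)); first by apply: oZ.
by rewrite g_op // Esum [g (f i) + _ + _]addrC addrA.
Qed.


Lemma F2_nat m : (m%:R : 'F_2) = (odd m)%:R.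
Proof. by rewrite -(Fp_nat_mod (isT : prime 2)) modn2; case: odd. Qed.

Definition clos Y := [set z | (mrank (z |: Y) <= mrank Y)%N].

Lemma Y_clos Y : Y \subset clos Y.
Proof. by apply/subsetP => z zY; rewrite inE mrank_U1_mem. Qed.

Lemma rank_clos Y : mrank (clos Y) = mrank Y.
Proof.
apply/eqP; rewrite eqn_leq (mrank_mono _ _ (Y_clos Y)) andbT.
apply: cl_span; first exact: Y_clos.
by move=> z; rewrite inE.
Qed.

Lemma closed_clos Y : closedset M (clos Y).
Proof.
move=> x; rewrite inE -ltnNge rank_clos => lt.
apply: leq_trans lt (mrank_mono _ _ _); apply: setUS; exact: Y_clos.
Qed.

Lemma key (s : seq T) x : uniq s -> x \notin [set:: s] ->
  (mrank [set:: s] < mrank (x |: [set:: s]))%N = (g x \notin <<map g s>>%VS).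
Proof.
move=> us xs; set Y := [set:: s].
apply/idP/idP => H.
  apply: contraL H => gxs; rewrite -leqNgt.
  set X := in_tuple (map g s).
  have E := coord_span (X := X) gxs.
  set I := [set i | coord X i (g x) == 1].
  have sz : size X = size s by rewrite /= size_map.
  pose f (i : 'I_(size X)) := nth x s i.
  have Xf (i : 'I_(size X)) : (map g s)`_i = g (f i) by rewrite /= (nth_map x) // -sz.
  have E2 : g x = \sum_(i in I) g (f i).
    rewrite {1}E [in RHS]big_mkcond /=; apply: eq_bigr => i _; rewrite inE Xf.
    have := F2_01 (coord X i (g x)); case: (coord X i (g x) == 1) => ->; by rewrite ?scale1r ?scale0r.
  have oI : odd #|I|.
    have := congr1 (fun v : 'rV['F_2]_n.+1 => v ord0 ord0) E2.
    rewrite /= summxE (eq_bigr (fun _ => 1)) ?sumr_const => [|i _]; last by rewrite mxE.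
    rewrite mxE eqxx -[1 *+ _]/(#|I|%:R) F2_nat; by case: odd.
  have finj : injective f.
    move=> i j; rewrite /f => /eqP; rewrite nth_uniq // -?sz // => /eqP; exact: val_inj.
  have fZ i : f i \in clos Y.
    apply: (subsetP (Y_clos Y)); rewrite /Y inE; apply: mem_nth; by rewrite -sz.
  have [z zZ gz] := opcl_sum (closed_opclosed Msimple no3c no3w (@closed_clos Y)) finj fZ oI.
  rewrite -E2 in gz; have := g_inj gz => zx; by move: zZ; rewrite zx inE.
apply: contraR H; rewrite -leqNgt => le.
case: (eqVneq Y set0) => [Y0|nY].
  exfalso; move: le; rewrite Y0 setU0 (mrank1 Msimple no3c) => h; have := leq_trans h (mrank_le_card set0); by rewrite cards0.
set W := [set z | g z \in <<map g s>>%VS].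
have YW : Y \subset W.
  apply/subsetP => z; rewrite /Y inE => zs; rewrite inE; apply: memv_span; exact: map_f.
have oW : opclosed M W.
  move=> a b c; rewrite !inE => ha hb hc ab ac bc; rewrite g_op //; by rewrite !memvD.
have nW : W != set0 by apply/set0Pn; case/set0Pn: nY => y yY; exists y; exact: (subsetP YW).
have cW := opclosed_closed Msimple no3c no3w hcard oW nW.
apply/negPn/negP => xW.
have xW' : x \notin W by rewrite inE. have := cW x xW'; by rewrite ltnNge (cl_mono _ _ _ YW le).
Qed.

Lemma indep_free (s : seq T) : uniq s -> indep [set:: s] = free (map g s).
Proof.
elim: s => [|x s IH] /=; first by rewrite set_nil indep0 nil_free.
case/andP => xs us; rewrite set_cons indepU1; last by rewrite inE.
rewrite free_cons IH //; case: (free _); rewrite ?andbT ?andbF //.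
by rewrite key // inE.
Qed.

End Lin.


Theorem lemma3p4 (T : finType) (M : matroid T) (r : nat) :
  1 <= r -> rank_of M = r -> simple M ->
  (forall C : {set T}, circuit M C -> #|C| != 3) ->
  (forall X : {set T}, claw M X -> #|X| != 3) ->
  2 ^ (r - 1) <= #|T| /\ (#|T| = 2 ^ (r - 1) -> iso_AG M r.-1).
Proof.
case: r => [//|n] _ hr Ms n3c n3w.
rewrite /rank_of in hr.
have [B [_ iB cB]] := @mrank_basis T M [set: T].
rewrite hr in cB.
have [x xB] : exists x, x \in B by apply/set0Pn; rewrite -card_gt0 cB.
split.
  have := Ucount Ms n3c n3w (@opclosedT T M) (m := n) (F := [set x]) (subsetT _) _ _.
  rewrite cards1 muln1 cardsT subn1 /=; apply.
    by apply/set0Pn; exists x; rewrite inE.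
  by rewrite hr (mrank1 Ms n3c) subn1.
move=> hcard; rewrite -hr in hcard.
exists (gf M cB); split; first exact: (gf_bij Ms n3c n3w hr hcard iB cB).
move=> X.
have := indep_free Ms n3c n3w hr hcard iB cB (enum_uniq (mem X)).
by rewrite set_enum => ->.
Qed.
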